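(* Let $G$ be a finite group and let $H\le K$ be core-free subgroups of $G$ with $|G:K|\ge2$. Then \[ \frac{\mathbf{m}(G\circlearrowright G/H)}{|K:H|}\le\mathbf{m}(G\circlearrowright G/K)\le\mathbf{m}(G\circlearrowright G/H). \]
   Context: For a core-free subgroup $L$ of $G$, $G\circlearrowright G/L$ denotes the (faithful, transitive) permutation group induced by the action of $G$ on the set $G/L$ of right cosets of $L$ by right multiplication. For a transitive permutation group $X$ on a finite set $\Omega$ with $|\Omega|\ge2$, a subset $A\subseteq\Omega$ is self-separable for $X$ if there exists $x\in X$ with $A\cap A^x=\emptyset$; $\mathbf{m}(X)$ is the minimum cardinality of a subset of $\Omega$ that is not self-separable for $X$. *)

(* Defs.v *)
From mathcomp Require Import all_boot all_order all_algebra all_fingroup.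
Set Implicit Arguments. Unset Strict Implicit. Unset Printing Implicit Defensive.
Import GRing.Theory Num.Theory.

(* The points of Omega = G/L are the right cosets L :* x
   (x in G), i.e. [rcosets L G]; the element x acts by C |-> C :* x. *)

Local Open Scope group_scope.
Section SelfSep.
Variable gT : finGroupType.
Implicit Types (G L : {set gT}) (A : {set {set gT}}).

Definition coset_image A (x : gT) : {set {set gT}} := [set C :* x | C in A].

Definition self_separable G A : bool :=
  [exists x in G, [disjoint A & coset_image A x]].

(* The default value #|G/L| is attained by Omega itself
   (Omega^x = Omega, and Omega is nonempty), so it never alters the min. *)
Definition mperm G L : nat :=
  \big[minn/#|rcosets L G|]_(A in powerset (rcosets L G) | ~~ self_separable G A) #|A|.

End SelfSep.

(* Main.v *)
Require Import Defs.
From mathcomp Require Import all_boot all_order all_algebra all_fingroup.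
Import GRing.Theory Num.Theory.
Local Open Scope group_scope.

Lemma disjointP (T : finType) (A B : {set T}) :
  reflect (forall x, x \in A -> x \in B -> False) [disjoint A & B].
Proof.
rewrite -setI_eq0; apply: (iffP eqP) => [h x xA xB | h].
  have: x \in A :&: B by rewrite inE xA xB.
  by rewrite h inE.
by apply/setP => x; rewrite !inE; apply/negbTE/andP => [[/h H1 /H1]].
Qed.

Section Aux.
Variable gT : finGroupType.
Implicit Types (G L : {set gT}) (A : {set {set gT}}).

Lemma mperm_le G L A : A \subset rcosets L G -> ~~ self_separable G A ->
  (mperm G L <= #|A|)%N.
Proof.
move=> sA nA; rewrite /mperm.
have : A \in index_enum {set {set gT}} by rewrite mem_index_enum.
have PA : (A \in powerset (rcosets L G)) && ~~ self_separable G A.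
  by rewrite powersetE sA.
elim: (index_enum _) => // B r IH; rewrite inE big_cons.
case/predU1P => [<-|/IH le]; first by rewrite PA geq_minl.
by case: ifP => _ //; rewrite geq_min le orbT.
Qed.

Lemma mperm_ind G L (P : nat -> Prop) : P #|rcosets L G| ->
  (forall A, A \subset rcosets L G -> ~~ self_separable G A -> P #|A|) ->
  (forall a b, P a -> P b -> P (minn a b)) -> P (mperm G L).
Proof.
move=> P0 PA Pm; rewrite /mperm; apply: big_ind => //.
by move=> A /andP[]; rewrite powersetE; apply: PA.
Qed.

Lemma mperm_le_card G L : (mperm G L <= #|rcosets L G|)%N.
Proof.
apply: (@mperm_ind G L (fun n => n <= #|rcosets L G|)%N) => //.
  by move=> A sA _; apply: subset_leq_card.
by move=> a b Ha _; rewrite geq_min Ha.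
Qed.
End Aux.

Theorem lemma3p3 (gT : finGroupType) (G H K : {group gT}) :
  H \subset K -> K \subset G ->
  gcore H G = 1 -> gcore K G = 1 ->
  1 < #|G : K| ->
  (((mperm G H)%:R / (#|K : H|)%:R : rat) <= (mperm G K)%:R)%R /\
  (mperm G K <= mperm G H)%N.
Proof.
move=> sHK sKG _ _ _.
pose pi (C : {set gT}) := K * C.
have piH y : pi (H :* y) = K :* y by rewrite /pi mulgA mulGSid.
have piM C x : pi (C :* x) = pi C :* x by rewrite /pi mulgA.
have cardGH : #|rcosets H G| = (#|rcosets K G| * #|K : H|)%N.
  by rewrite -[#|rcosets H G|]/(#|G : H|) -(Lagrange_index sKG sHK).
split.
-
  suff: (mperm G H <= #|K : H| * mperm G K)%N.
    move=> le; rewrite ler_pdivrMr ?ltr0n ?indexg_gt0 // -natrM ler_nat.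
    by rewrite mulnC.
  apply: (@mperm_ind _ G K (fun n => mperm G H <= #|K : H| * n)%N).
  + by rewrite mulnC -cardGH mperm_le_card.
  + move=> B sB nB.
    pose A := [set C in rcosets H G | pi C \in B].
    have sA : A \subset rcosets H G by apply/subsetP=> C; rewrite inE => /andP[].
    have nA : ~~ self_separable G A.
      apply: contra nB => /existsP[x /andP[xG dA]].
      apply/existsP; exists x; rewrite xG /=.
      apply/disjointP => b bB /imsetP[b' b'B eb].
      have /rcosetsP[y yG eby] := subsetP sB b bB.
      move/disjointP: dA => dA; apply: (dA (H :* y)).
        by rewrite /A inE; apply/andP; split; [apply/rcosetsP; exists y | rewrite piH -eby].
      apply/imsetP; exists (H :* (y * x^-1)); last first.
        by rewrite -rcosetM -mulgA mulVg mulg1.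
      rewrite /A inE; apply/andP; split.
        by apply/rcosetsP; exists (y * x^-1) => //; rewrite groupM ?groupV.
      by rewrite piH rcosetM -eby eb -rcosetM mulgV rcoset1.
    rewrite /=; apply: leq_trans (@mperm_le _ _ _ _ sA nA) _.
    pose f (p : {set gT} * {set gT}) := p.1 :* repr p.2.
    have sAf : A \subset f @: setX (rcosets H K) B.
      apply/subsetP => C; rewrite inE => /andP[/rcosetsP[z zG ->]].
      rewrite piH => zB.
      have rK : repr (K :* z) \in K :* z by apply: mem_repr (rcoset_refl _ _).
      rewrite mem_rcoset in rK.
      apply/imsetP; exists (H :* (z * (repr (K :* z))^-1), K :* z).
        rewrite inE /= zB andbT; apply/rcosetsP; exists (z * (repr (K :* z))^-1) => //.
        by rewrite -{1}(invgK z) -invMg groupV.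
      by rewrite /f /= -rcosetM -mulgA mulVg mulg1.
    apply: leq_trans (subset_leq_card sAf) _.
    apply: leq_trans (leq_imset_card _ _) _.
    by rewrite cardsX.
  + by move=> a b Ha Hb /=; rewrite /minn; case: ifP.
- apply: (@mperm_ind _ G H (fun n => mperm G K <= n)%N).
  + apply: leq_trans (mperm_le_card _ _ _) _.
    by rewrite cardGH leq_pmulr // indexg_gt0.
  + move=> A sA nA.
    have sAK : pi @: A \subset rcosets K G.
      apply/subsetP => C /imsetP[D /(subsetP sA) /rcosetsP[y yG ->] ->].
      by rewrite piH; apply/rcosetsP; exists y.
    apply: leq_trans (@mperm_le _ _ _ _ sAK _) (leq_imset_card _ _).
    apply: contra nA => /existsP[x /andP[xG dA]].
    apply/existsP; exists x; rewrite xG /=.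
    apply/disjointP => C CA /imsetP[D DA eC].
    move/disjointP: dA => dA; apply: (dA (pi C)); first exact: imset_f.
    by apply/imsetP; exists (pi D); [apply: imset_f | rewrite eC piM].
  + by move=> a b Ha Hb; rewrite leq_min Ha Hb.
Qed.
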